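(* Let $\mathcal{A}$ be an Ershov $\mathcal{C}$-algebra. Then $\mathcal{A}$ is weakly equationally Noetherian if and only if both of the following hold: \begin{enumerate} \item every subset of $\mathcal{C}$ that is bounded above in $\mathcal{A}$ has a supremum in $\mathcal{A}$, and this supremum belongs to $\mathcal{C}$; \item for every set $\{c_j \mid j\in J\} \subseteq \mathcal{C}$ that is not bounded above there exists $c \in \mathcal{C}$ such that the system $\{x \wedge c_j = 0 \mid j \in J\}$ in one variable $x$ is equivalent over $\mathcal{A}$ to the equation $x \leq c$. \end{enumerate}
   Context: An Ershov algebra is a structure $\langle A; \vee, \wedge, \setminus, 0\rangle$ such that $\langle A;\vee,\wedge\rangle$ is a distributive lattice with least element $0$, and $b \setminus a$ is the relative complement: the unique $z$ with $z \wedge a = 0$ and $z \vee a = a \vee b$. An Ershov $\mathcal{C}$-algebra is an Ershov algebra $\mathcal{A}$ together with a distinguished subalgebra $\mathcal{C}$ whose elements are added as constant symbols; $\mathcal{L}$ is the language $\{\vee,\wedge,\setminus,0\}$ plus these constants. An equation is $t(\bar x)=s(\bar x)$ with $t,s$ terms of $\mathcal{L}$; $t\le s$ means the equation $t\vee s=s$. Two systems of equations are equivalent over $\mathcal{A}$ if they have the same solution set. $\mathcal{A}$ is weakly equationally Noetherian if every system of equations (possibly infinite) in finitely many variables is equivalent over $\mathcal{A}$ to some finite system of equations of $\mathcal{L}$. ''Not bounded above'' means having no upper bound in $\mathcal{A}$. *)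

(* Defs.v *)
(* An Ershov algebra <A; \/, /\, \, 0> is exactly a
   sectionally complemented distributive lattice with bottom
   ([cbDistrLatticeType d] in mathcomp's order library): join `|`,
   meet `&`, bottom \bot (= 0), relative complement `\`. *)
From Stdlib Require Import List.
From mathcomp Require Import all_boot all_order.
Set Implicit Arguments. Unset Strict Implicit. Unset Printing Implicit Defensive.
Import Order.Theory.
Local Open Scope order_scope.

Section Ershov.
Variables (d : Order.disp_t) (A : cbDistrLatticeType d).

Definition subalgebra (C : A -> Prop) : Prop :=
  [/\ C \bot,
      (forall x y, C x -> C y -> C (x `|` y)),
      (forall x y, C x -> C y -> C (x `&` y)) &
      (forall x y, C x -> C y -> C (x `\` y))].

Inductive term (C : A -> Prop) (n : nat) : Type :=
  | Tvar of 'I_n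
  | Tconst of {c : A | C c}
  | Tzero
  | Tjoin of term C n & term C n
  | Tmeet of term C n & term C n
  | Tdiff of term C n & term C n.

Fixpoint eval (C : A -> Prop) (n : nat) (v : 'I_n -> A) (t : term C n) : A :=
  match t with
  | Tvar i => v i
  | Tconst c => proj1_sig c
  | Tzero => \bot
  | Tjoin t1 t2 => eval v t1 `|` eval v t2
  | Tmeet t1 t2 => eval v t1 `&` eval v t2
  | Tdiff t1 t2 => eval v t1 `\` eval v t2
  end.

Definition equation (C : A -> Prop) (n : nat) : Type := (term C n * term C n)%type.

Definition solves (C : A -> Prop) (n : nat) (v : 'I_n -> A)
    (S : equation C n -> Prop) : Prop :=
  forall e, S e -> eval v e.1 = eval v e.2.

Definition equivalent (C : A -> Prop) (n : nat)
    (S1 S2 : equation C n -> Prop) : Prop :=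
  forall v : 'I_n -> A, solves v S1 <-> solves v S2.

Definition weakly_eq_noetherian (C : A -> Prop) : Prop :=
  forall (n : nat) (S : equation C n -> Prop),
  exists S0 : seq (equation C n),
    equivalent S (fun e => In e S0).

Definition upper_bound (S : A -> Prop) (u : A) : Prop :=
  forall s, S s -> s <= u.

Definition bounded_above (S : A -> Prop) : Prop := exists u, upper_bound S u.

Definition is_supremum (S : A -> Prop) (u : A) : Prop :=
  upper_bound S u /\ (forall w, upper_bound S w -> u <= w).

End Ershov.

(* Main.v *)
Require Import Defs.
From Stdlib Require Import List Classical.
From mathcomp Require Import all_boot all_order.
Set Implicit Arguments. Unset Strict Implicit. Unset Printing Implicit Defensive.
Import Order.Theory.
Local Open Scope order_scope.

Lemma meetB_e {d} {A : cbDistrLatticeType d} (p q e : A) :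
  (p `\` q) `&` e = (p `&` e) `\` (q `&` e).
Proof. by rewrite meetBx diffxI [X in _ `|` X]diffIx diffxx meetx0 joinx0. Qed.

Lemma diffB_e {d} {A : cbDistrLatticeType d} (p q e : A) :
  (p `\` q) `\` e = (p `\` e) `\` (q `\` e).
Proof. by rewrite !diffBx diffKU joinC. Qed.

Lemma meetI_e {d} {A : cbDistrLatticeType d} (p q e : A) :
  (p `&` q) `&` e = (p `&` e) `&` (q `&` e).
Proof. by rewrite meetACA meetxx. Qed.

Lemma lt_bot_diff {d} {A : cbDistrLatticeType d} (x y : A) :
  x `\` y = \bot <-> x <= y.
Proof. by rewrite -diff_eq0; split => [->|/eqP]. Qed.

Lemma join_bot {d} {A : cbDistrLatticeType d} (x y : A) :
  x `|` y = \bot <-> x = \bot /\ y = \bot.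
Proof. split => [/eqP|[-> ->]]; last by rewrite joinxx.
  by rewrite join_eq0 => /andP[/eqP -> /eqP ->]. Qed.
Section Terms.
Variables (d : Order.disp_t) (A : cbDistrLatticeType d) (C : A -> Prop).
Hypothesis HC : subalgebra C.

Notation term := (term C).
Notation eval := (@eval d A C _).

Lemma eval_ext n (v w : 'I_n -> A) (t : term n) :
  (forall i, v i = w i) -> eval v t = eval w t.
Proof. by move=> H; elim: t => //= [t1 -> t2 ->|t1 -> t2 ->|t1 -> t2 ->]. Qed.

Lemma eval_C n (v : 'I_n -> A) (t : term n) :
  (forall i, C (v i)) -> C (eval v t).
Proof.
case: HC => H0 HJ HM HD Hv.
elim: t => //= [[c Hc]|t1 I1 t2 I2|t1 I1 t2 I2|t1 I1 t2 I2]; auto.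
Qed.

Lemma P1 n (v : 'I_n -> A) (t : term n) (e : A) :
  eval v t `&` e = eval (fun i => v i `&` e) t `&` e.
Proof.
elim: t => //= [i|t1 I1 t2 I2|t1 I1 t2 I2|t1 I1 t2 I2].
- by rewrite -meetA meetxx.
- by rewrite !meetUl I1 I2.
- by rewrite meetI_e I1 I2 -meetI_e.
- by rewrite meetB_e I1 I2 -meetB_e.
Qed.

Lemma P2 n (v : 'I_n -> A) (t : term n) (e : A) :
  eval v t `\` e = eval (fun i => v i `\` e) t `\` e.
Proof.
elim: t => //= [i|t1 I1 t2 I2|t1 I1 t2 I2|t1 I1 t2 I2].
- by rewrite diffBx joinxx.
- by rewrite !diffUx I1 I2.
- by rewrite !diffIx I1 I2.
- by rewrite diffB_e I1 I2 -diffB_e.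
Qed.

Fixpoint cj n (t : term n) : A :=
  match t with
  | Tconst c => proj1_sig c
  | Tjoin a b | Tmeet a b | Tdiff a b => cj a `|` cj b
  | _ => \bot
  end.

Lemma cj_C n (t : term n) : C (cj t).
Proof.
case: HC => H0 HJ HM HD.
elim: t => //= [[c Hc]|t1 I1 t2 I2|t1 I1 t2 I2|t1 I1 t2 I2]; auto.
Qed.

Fixpoint eps n (t : term n) : bool :=
  match t with
  | Tvar _ => true
  | Tjoin a b => eps a || eps b
  | Tmeet a b => eps a && eps b
  | Tdiff a b => eps a && ~~ eps b
  | _ => false
  end.

Lemma eps_lemma n (v : 'I_n -> A) (x K : A) (t : term n) :
  (forall i, v i = x) -> cj t <= K ->
  eval v t `\` K = if eps t then x `\` K else \bot.
Proof.
move=> Hv; elim: t => /= [i|[c Hc]|| t1 I1 t2 I2|t1 I1 t2 I2|t1 I1 t2 I2].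
- by rewrite Hv.
- by move=> /= H; apply/lt_bot_diff.
- by rewrite diff0x.
- rewrite leUx => /andP[H1 H2]; rewrite diffUx (I1 H1) (I2 H2).
  by case: (eps t1); case: (eps t2); rewrite /= ?joinxx ?joinx0 ?join0x.
- rewrite leUx => /andP[H1 H2]; rewrite diffIx (I1 H1) (I2 H2).
  by case: (eps t1); case: (eps t2); rewrite /= ?meetxx ?meetx0 ?meet0x.
- rewrite leUx => /andP[H1 H2]; rewrite diffB_e (I1 H1) (I2 H2).
  by case: (eps t1); case: (eps t2); rewrite /= ?diffxx ?diffx0 ?diff0x.
Qed.

Fixpoint subst n m (s : 'I_n -> term m) (t : term n) : term m :=
  match t with
  | Tvar i => s i
  | Tconst c => Tconst m c
  | Tzero => Tzero C m
  | Tjoin a b => Tjoin (subst s a) (subst s b)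
  | Tmeet a b => Tmeet (subst s a) (subst s b)
  | Tdiff a b => Tdiff (subst s a) (subst s b)
  end.

Lemma eval_subst n m (s : 'I_n -> term m) (v : 'I_m -> A) (t : term n) :
  eval v (subst s t) = eval (fun i => eval v (s i)) t.
Proof. by elim: t => //= [t1 -> t2 ->|t1 -> t2 ->|t1 -> t2 ->]. Qed.

Definition rterm n (e : equation C n) : term n :=
  Tjoin (Tdiff e.1 e.2) (Tdiff e.2 e.1).

Lemma rterm_bot n (v : 'I_n -> A) (e : equation C n) :
  eval v (rterm e) = \bot <-> eval v e.1 = eval v e.2.
Proof.
rewrite /rterm /= join_bot !lt_bot_diff; split => [[H1 H2]|->]; last by split.
by apply/le_anti; rewrite H1 H2.
Qed.

Definition rsys n (F : seq (equation C n)) : term n :=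
  foldr (fun e acc => Tjoin (rterm e) acc) (Tzero C n) F.

Definition fsol n (v : 'I_n -> A) (F : seq (equation C n)) :=
  forall e, In e F -> eval v e.1 = eval v e.2.

Lemma rsys_bot n v (F : seq (equation C n)) :
  eval v (rsys F) = \bot <-> fsol v F.
Proof.
rewrite /fsol; elim: F => [|e F IH] /=; first by split => // _ e [].
rewrite join_bot IH rterm_bot; split.
- by move=> [H1 H2] e' [<-|/H2].
- by move=> H; split; [apply: H; left | move=> e' He'; apply: H; right].
Qed.

Definition c1 (x : A) : 'I_1 -> A := fun _ => x.

Lemma least1 (r : term 1) (x : A) :
  eval (c1 x) r = \bot -> eval (c1 \bot) r <= x.
Proof.
move=> H; have := P2 (c1 x) r x; rewrite H diff0x.
rewrite (eval_ext (w := c1 \bot)) => [E|i]; last exact: diffxx.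
by apply/lt_bot_diff.
Qed.

Lemma least2 (r : term 1) (u : A) :
  eval (c1 u) r = \bot -> eval (c1 (eval (c1 \bot) r)) r = \bot.
Proof.
move=> H; set m := eval (c1 \bot) r.
have mu : m <= u by apply: least1.
rewrite -(joinIB m (eval (c1 m) r)).
have -> : eval (c1 m) r `\` m = \bot.
  rewrite P2 (eval_ext (w := c1 \bot)) => [|i]; last exact: diffxx.
  exact: diffxx.
have -> : eval (c1 m) r `&` m = \bot.
  have := P1 (c1 u) r m; rewrite H meet0x.
  rewrite (eval_ext (w := c1 m)) => [<-//|i]; exact: meet_r.
by rewrite joinxx.
Qed.

Lemma fwd1 : weakly_eq_noetherian C ->
  forall S : A -> Prop, (forall s, S s -> C s) -> bounded_above S ->
      exists u, is_supremum S u /\ C u.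
Proof.
move=> W S SC [u Hu].
pose Sys := fun e : equation C 1 => exists s (Hs : S s),
   e = (Tjoin (Tconst 1 (exist C s (SC s Hs))) (Tvar C ord0), Tvar C ord0).
have HS : forall x, solves (c1 x) Sys <-> upper_bound S x.
  move=> x; split.
  - move=> H s Hs; have := H _ (ex_intro _ s (ex_intro _ Hs erefl)) => /= E.
    exact/join_idPr.
  - move=> H e [s [Hs ->]] /=; exact/join_idPr/H.
have [F HF] := W 1 Sys.
pose r := rsys F.
have Hr : forall x, eval (c1 x) r = \bot <-> upper_bound S x.
  move=> x; rewrite -HS; split => H; [apply/HF/rsys_bot | apply/rsys_bot/HF]; exact H.
exists (eval (c1 \bot) r); split; last by apply: eval_C => i; case: HC.
split.
- apply/Hr/(least2 (u := u)); exact/Hr.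
- by move=> w /Hr /least1.
Qed.

Lemma fwd2 : weakly_eq_noetherian C ->
  forall S : A -> Prop, (forall s, S s -> C s) -> ~ bounded_above S ->
      exists c, C c /\
        (forall x : A, (forall s, S s -> x `&` s = \bot) <-> x `|` c = c).
Proof.
move=> W S SC NB.
pose Sys := fun e : equation C 1 => exists s (Hs : S s),
   e = (Tmeet (Tvar C ord0) (Tconst 1 (exist C s (SC s Hs))), Tzero C 1).
have HS : forall x, solves (c1 x) Sys <-> (forall s, S s -> x `&` s = \bot).
  move=> x; split.
  - move=> H s Hs; exact: (H _ (ex_intro _ s (ex_intro _ Hs erefl))).
  - by move=> H e [s [Hs ->]] /=; apply: H.
have [F HF] := W 1 Sys.
pose r := rsys F.
have Hr : forall x, eval (c1 x) r = \bot <-> (forall s, S s -> x `&` s = \bot).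
  move=> x; rewrite -HS; split => H; [apply/HF/rsys_bot | apply/rsys_bot/HF]; exact H.
pose K := cj r.
have KC : C K := cj_C r.
have r0 : eval (c1 \bot) r = \bot by apply/Hr => s _; rewrite meet0x.
have epsT : eps r = true.
  case E: (eps r) => //; exfalso; apply: NB; exists K => s Hs.
  pose z := s `\` K.
  have Hz1 : eval (c1 z) r `\` K = \bot.
    by rewrite (eps_lemma (x := z)) ?E.
  have Hz2 : eval (c1 z) r `&` K = \bot.
    rewrite P1 (eval_ext (w := c1 \bot)) ?r0 ?meet0x // => i; exact: diffIK.
  have Hz : eval (c1 z) r = \bot.
    by rewrite -(joinIB K (eval (c1 z) r)) Hz1 Hz2 joinxx.
  move/Hr: Hz => /(_ s Hs); rewrite /z meetC meet_r ?leBx //; by move/lt_bot_diff.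
exists (K `\` eval (c1 K) r); split.
  by case: HC => _ _ _ HD; apply: HD => //; apply: eval_C => i; exact KC.
move=> x; rewrite -Hr; split.
- move=> Hx; apply/join_idPr.
  have xK : x <= K.
    apply/lt_bot_diff.
    have := eps_lemma (v := c1 x) (x := x) (K := K) (t := r) (fun _ => erefl) (lexx _).
    by rewrite epsT Hx diff0x => <-.
  rewrite -(meet_eq0E_diff _ xK) meetC; apply/eqP.
  rewrite P1 (eval_ext (w := c1 x)) ?Hx ?meet0x // => i; exact: meet_r.
- move=> /join_idPr Hxc; have xK : x <= K := le_trans Hxc (leBx _ _).
  have Hd : x `&` eval (c1 K) r = \bot by apply/eqP; rewrite (meet_eq0E_diff _ xK).
  rewrite -(joinIB x (eval (c1 x) r)).
  have -> : eval (c1 x) r `\` x = \bot.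
    rewrite P2 (eval_ext (w := c1 \bot)) ?r0 ?diff0x // => i; exact: diffxx.
  have E : eval (c1 K) r `&` x = eval (c1 x) r `&` x.
    rewrite P1 (eval_ext (w := c1 x)) // => i; exact: meet_r.
  by rewrite -E meetC Hd joinxx.
Qed.

Definition Defn n (P : ('I_n -> A) -> Prop) :=
  exists F : seq (equation C n), forall v, P v <-> fsol v F.

Lemma Defn_ext n (P Q : ('I_n -> A) -> Prop) :
  (forall v, P v <-> Q v) -> Defn P -> Defn Q.
Proof. by move=> H [F HF]; exists F => v; split => [/H/HF|/HF/H]. Qed.

Lemma Defn_and n (P Q : ('I_n -> A) -> Prop) :
  Defn P -> Defn Q -> Defn (fun v => P v /\ Q v).
Proof.
move=> [F1 H1] [F2 H2]; exists (List.app F1 F2) => v; split.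
- move=> [/H1 HP /H2 HQ] e /List.in_app_iff [He|He]; [exact: HP | exact: HQ].
- move=> H; split; [apply/H1 | apply/H2] => e He; apply: H; apply/List.in_app_iff; auto.
Qed.

Lemma Defn_all n (X : eqType) (l : seq X) (P : X -> ('I_n -> A) -> Prop) :
  (forall x, Defn (P x)) -> Defn (fun v => forall x, x \in l -> P x v).
Proof.
move=> H; elim: l => [|x l IH].
  by exists [::] => v; split => // _ e [].
apply: Defn_ext (Defn_and (H x) IH) => v; split.
- by move=> [Hx Hl] y; rewrite in_cons => /orP[/eqP ->|/Hl].
- move=> Hy; split; first by apply: Hy; rewrite in_cons eqxx.
  by move=> y Hyl; apply: Hy; rewrite in_cons Hyl orbT.
Qed.

Lemma Defn_subst n (P : ('I_1 -> A) -> Prop) (w : term n) :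
  Defn P -> Defn (fun v => P (c1 (eval v w))).
Proof.
move=> [F HF].
exists (List.map (fun e => (subst (fun _ => w) e.1, subst (fun _ => w) e.2)) F) => v.
have E : forall t, eval v (subst (fun _ => w) t) = eval (c1 (eval v w)) t.
  by move=> t; rewrite eval_subst.
split.
- move=> /HF H e /List.in_map_iff [e' [<- He']] /=; rewrite !E; exact: H.
- move=> H; apply/HF => e He; rewrite -!E.
  apply: (H (subst (fun _ => w) e.1, subst (fun _ => w) e.2)).
  apply/List.in_map_iff; by exists e.
Qed.

Hypothesis H1 : forall S : A -> Prop, (forall s, S s -> C s) -> bounded_above S ->
      exists u, is_supremum S u /\ C u.
Hypothesis H2 : forall S : A -> Prop, (forall s, S s -> C s) -> ~ bounded_above S ->
      exists c, C c /\
        (forall x : A, (forall s, S s -> x `&` s = \bot) <-> x `|` c = c).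

Lemma UB_def (P : A -> Prop) : (forall p, P p -> C p) ->
  Defn (fun v : 'I_1 -> A => forall p, P p -> p <= v ord0).
Proof.
move=> PC; case: (classic (bounded_above P)) => [B|NB].
- have [u [[Hu1 Hu2] Cu]] := H1 PC B.
  exists [:: (Tjoin (Tconst 1 (exist C u Cu)) (Tvar C ord0), Tvar C ord0)] => v.
  rewrite /fsol; split.
  + move=> H e [<-|[]] /=; apply/join_idPr/Hu2; exact: H.
  + move=> H p Hp; apply: le_trans (Hu1 _ Hp) _; apply/join_idPr.
    exact: (H _ (or_introl erefl)).
- have [p [Pp Np]] : exists p, P p /\ ~ p <= \bot.
    apply: NNPP => N; apply: NB; exists \bot => p Pp; apply: NNPP => Np.
    by apply: N; exists p.
  exists [:: (Tconst 1 (exist C p (PC p Pp)), Tzero C 1)] => v; split.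
  + move=> H; exfalso; apply: NB; exists (v ord0); exact: H.
  + move=> H; exfalso; apply: Np; have := H _ (or_introl erefl) => /= ->.
    exact: lexx.
Qed.

Lemma DJ_def (P : A -> Prop) : (forall p, P p -> C p) ->
  Defn (fun v : 'I_1 -> A => forall p, P p -> v ord0 `&` p = \bot).
Proof.
move=> PC; case: (classic (bounded_above P)) => [B|NB].
- have [u [[Hu1 Hu2] Cu]] := H1 PC B.
  exists [:: (Tmeet (Tvar C ord0) (Tconst 1 (exist C u Cu)), Tzero C 1)] => v.
  split.
  + move=> H e [<-|[]] /=.
    have : u <= u `\` v ord0.
      apply: Hu2 => p Pp; rewrite -(meet_eq0E_diff _ (Hu1 _ Pp)) meetC.
      apply/eqP; exact: H.
    by rewrite -(meet_eq0E_diff _ (lexx u)) meetC => /eqP.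
  + move=> H p Pp; have := H _ (or_introl erefl) => /= E.
    apply/eqP; rewrite -lex0 -E; exact: leI2 (lexx _) (Hu1 _ Pp).
- have [c [Cc Hc]] := H2 PC NB.
  exists [:: (Tjoin (Tvar C ord0) (Tconst 1 (exist C c Cc)), Tconst 1 (exist C c Cc))] => v.
  split.
  + by move=> H e [<-|[]] /=; apply/Hc.
  + move=> H; apply/Hc; exact: (H _ (or_introl erefl)).
Qed.

Lemma LB_def (P : A -> Prop) : (forall p, P p -> C p) ->
  Defn (fun v : 'I_1 -> A => forall p, P p -> v ord0 <= p).
Proof.
move=> PC; case: (classic (exists k, P k)) => [[k0 Pk0]|NE].
- pose D := fun z => exists k, P k /\ z = k0 `\` k.
  have DC : forall z, D z -> C z.
    move=> z [k [Pk ->]]; case: HC => _ _ _ HD; apply: HD; auto.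
  have [F1 HF1] := DJ_def DC.
  have Ck0 := PC _ Pk0.
  exists ((Tjoin (Tvar C ord0) (Tconst 1 (exist C k0 Ck0)), Tconst 1 (exist C k0 Ck0)) :: F1) => v.
  split.
  + move=> H e [<-|He] /=; first exact/join_idPr/H.
    have HH : fsol v F1.
      apply/HF1 => z [k [Pk ->]].
      apply/eqP; rewrite -lex0; apply: le_trans (leI2 (H _ Pk) (lexx _)) _.
      by rewrite diffKI.
    exact: HH.
  + move=> H p Pp.
    have xk0 : v ord0 <= k0 by apply/join_idPr; exact: (H _ (or_introl erefl)).
    have HD : v ord0 `&` (k0 `\` p) = \bot.
      apply: (proj2 (HF1 v) (fun e He => H e (or_intror He))).
      by exists p.
    move: HD => /eqP; rewrite (meet_eq0E_diff _ xk0) diffxB diffxx join0x.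
    move=> /le_trans; apply; exact: leIr.
- exists [::] => v; split => [_ e []|_ p Pp]; exfalso; apply: NE; by exists p.
Qed.

Lemma onevar_char (r : term 1) (x : A) :
  eval (c1 x) r = ((x `&` (eval (c1 (cj r)) r `&` cj r))
                   `|` (if eps r then x `\` cj r else \bot))
                  `|` (eval (c1 \bot) r `\` x).
Proof.
set K := cj r.
have E1 : eval (c1 x) r `\` x = eval (c1 \bot) r `\` x.
  rewrite P2 (eval_ext (w := c1 \bot)) // => i; exact: diffxx.
have E2 : (eval (c1 x) r `&` x) `\` K = if eps r then x `\` K else \bot.
  rewrite -meetBx (eps_lemma (x := x)) //.
  by case: (eps r); [exact: meet_l (leBx _ _) | exact: meet0x].
have Ea : eval (c1 x) r `&` (x `&` K) = eval (c1 (x `&` K)) r `&` (x `&` K).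
  by rewrite P1; congr (_ `&` _); apply: eval_ext => i; rewrite /c1 meetA meetxx.
have Eb : eval (c1 K) r `&` (x `&` K) = eval (c1 (x `&` K)) r `&` (x `&` K).
  by rewrite P1; congr (_ `&` _); apply: eval_ext => i; rewrite /c1 meetCA meetxx.
have E3 : (eval (c1 x) r `&` x) `&` K = x `&` (eval (c1 K) r `&` K).
  by rewrite -meetA Ea -Eb meetCA.
by rewrite -(joinIB x (eval (c1 x) r)) E1 -(joinIB K (eval (c1 x) r `&` x)) E3 E2.
Qed.

Lemma onevar_bot (r : term 1) (x : A) :
  eval (c1 x) r = \bot <->
  [/\ eval (c1 \bot) r <= x, x `&` (eval (c1 (cj r)) r `&` cj r) = \bot
    & (eps r -> x <= cj r)].
Proof.
rewrite onevar_char !join_bot lt_bot_diff; case: (eps r); split.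
- by move=> [[G1 /lt_bot_diff G2] G3]; split.
- by move=> [G3 G1 G2]; split => //; split => //; apply/lt_bot_diff; auto.
- by move=> [[G1 _] G3]; split.
- by move=> [G1 G2 _].
Qed.

Lemma WEN1 (R : term 1 -> Prop) :
  Defn (fun v : 'I_1 -> A => forall r, R r -> eval v r = \bot).
Proof.
pose B := fun b => exists r, R r /\ b = eval (c1 \bot) r.
pose Q := fun q => exists r, R r /\ q = eval (c1 (cj r)) r `&` cj r.
pose Ks := fun k => exists r, R r /\ eps r /\ k = cj r.
have CB : forall b, B b -> C b.
  move=> b [r [_ ->]]; apply: eval_C => i; by case: HC.
have CQ : forall q, Q q -> C q.
  move=> q [r [_ ->]]; case: HC => _ _ HM _; apply: HM; last exact: cj_C.
  apply: eval_C => i; exact: cj_C.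
have CK : forall k, Ks k -> C k.
  move=> k [r [_ [_ ->]]]; exact: cj_C.
apply: (Defn_ext _ (Defn_and (UB_def CB) (Defn_and (DJ_def CQ) (LB_def CK)))).
move=> v; have Ev : forall r, eval v r = eval (c1 (v ord0)) r.
  move=> r; apply: eval_ext => i; by rewrite /c1 (ord1 i).
split.
- move=> [HB [HQ HK]] r Rr; rewrite Ev; apply/onevar_bot; split.
  + apply: HB; by exists r.
  + apply: HQ; by exists r.
  + move=> e; apply: HK; by exists r.
- move=> H; split; [|split].
  + move=> b [r [Rr ->]]; have := H r Rr; rewrite Ev => /onevar_bot [].
    by [].
  + move=> q [r [Rr ->]]; have := H r Rr; rewrite Ev => /onevar_bot [].
    by [].
  + move=> k [r [Rr [e ->]]]; have := H r Rr; rewrite Ev => /onevar_bot [].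
    by auto.
Qed.

Definition Jl n (l : seq 'I_n) : term n :=
  foldr (fun i acc => Tjoin (Tvar C i) acc) (Tzero C n) l.
Definition Jt n : term n := Jl (enum 'I_n).
Definition Ul n (b : {ffun 'I_n -> bool}) (l : seq 'I_n) : term n :=
  foldr (fun i acc => Tjoin (if b i then Tdiff (Jt n) (Tvar C i) else Tvar C i) acc)
        (Tzero C n) l.
Definition Mt n (b : {ffun 'I_n -> bool}) (l : seq 'I_n) : term n :=
  Tdiff (Jt n) (Ul b l).

Lemma Jl_ge n (v : 'I_n -> A) (l : seq 'I_n) i : i \in l -> v i <= eval v (Jl l).
Proof.
elim: l => //= j l IH; rewrite in_cons => /orP[/eqP ->|/IH H].
  exact: leUl.
exact: le_trans H (leUr _ _).
Qed.

Lemma Jt_ge n (v : 'I_n -> A) i : v i <= eval v (Jt n).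
Proof. by apply: Jl_ge; rewrite mem_enum. Qed.

Lemma Ul_ge n (v : 'I_n -> A) (b : {ffun 'I_n -> bool}) (l : seq 'I_n) i : i \in l ->
  (if b i then eval v (Jt n) `\` v i else v i) <= eval v (Ul b l).
Proof.
elim: l => //= j l IH; rewrite in_cons => /orP[/eqP ->|/IH H].
  by case: (b j); exact: leUl.
exact: le_trans H (leUr _ _).
Qed.

Lemma Ul_dep n (b b' : {ffun 'I_n -> bool}) (l : seq 'I_n) :
  (forall i, i \in l -> b i = b' i) -> Ul b l = Ul b' l.
Proof.
elim: l => //= j l IH H.
rewrite (H j (mem_head _ _)) IH // => i Hi; apply: H; by rewrite in_cons Hi orbT.
Qed.

Lemma Mt_cons n (v : 'I_n -> A) (b : {ffun 'I_n -> bool}) (l : seq 'I_n) i :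
  eval v (Mt b (i :: l)) =
  eval v (Mt b l) `\` (if b i then eval v (Jt n) `\` v i else v i).
Proof. by rewrite /Mt /=; case: (b i); rewrite /= diffBx joinC. Qed.

Lemma cell_meet n (v : 'I_n -> A) (b : {ffun 'I_n -> bool}) i :
  v i `&` eval v (Mt b (enum 'I_n)) = if b i then eval v (Mt b (enum 'I_n)) else \bot.
Proof.
have iU := Ul_ge v b (mem_enum (pred_of_simpl predT) i).
rewrite /Mt /=; case: (b i) iU => iU.
- apply: meet_r; apply: (le_trans (leBr _ iU)).
  rewrite diffxB diffxx join0x; exact: leIr.
- apply/eqP; rewrite -lex0; apply: le_trans (leI2 iU (lexx _)) _.
  by rewrite diffKI.
Qed.

Lemma diff_Jdiff (a J x : A) : a <= J -> a `\` (J `\` x) = a `&` x.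
Proof. by move=> aJ; rewrite diffxB (proj2 (lt_bot_diff _ _) aJ) join0x. Qed.

Lemma cover n (v : 'I_n -> A) (l : seq 'I_n) : forall z, z <= eval v (Jt n) ->
  (forall b, z `&` eval v (Mt b l) = \bot) -> z = \bot.
Proof.
elim: l => [|i l IH] z zJ H.
  by have := H [ffun => false]; rewrite /Mt /= diffx0 meet_l.
apply: IH => // b.
case Hil: (i \in l).
- have Hd : eval v (Mt b l) `&` (if b i then eval v (Jt n) `\` v i else v i) == \bot.
    rewrite -lex0; apply: le_trans (leI2 (lexx _) (Ul_ge v b Hil)) _.
    by rewrite /Mt /= diffIK.
  by have := H b; rewrite Mt_cons (disj_diffl Hd).
- pose b1 := [ffun j => if j == i then true else b j].
  pose b0 := [ffun j => if j == i then false else b j].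
  have E1 : Ul b1 l = Ul b l.
    apply: Ul_dep => j Hj; rewrite ffunE; case: eqP => // ji.
    by rewrite ji Hil in Hj.
  have E0 : Ul b0 l = Ul b l.
    apply: Ul_dep => j Hj; rewrite ffunE; case: eqP => // ji.
    by rewrite ji Hil in Hj.
  have Hb1 := H b1; have Hb0 := H b0.
  rewrite Mt_cons ffunE eqxx /Mt E1 in Hb1.
  rewrite Mt_cons ffunE eqxx /Mt E0 in Hb0.
  have F0 : (z `&` eval v (Mt b l)) `\` v i = \bot.
    by rewrite meetC -meetBx meetC; exact: Hb0.
  have F1 : (z `&` eval v (Mt b l)) `&` v i = \bot.
    rewrite -meetA -(@diff_Jdiff (eval v (Mt b l)) (eval v (Jt n)) (v i) (leBx _ _)).
    exact: Hb1.
  by rewrite -(joinIB (v i) (z `&` eval v (Mt b l))) F0 F1 joinxx.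
Qed.

Definition rJ n (r : term n) : term 1 :=
  Tdiff (subst (fun _ => Tzero C 1) r) (Tvar C ord0).
Definition rB n (b : {ffun 'I_n -> bool}) (r : term n) : term 1 :=
  Tmeet (subst (fun i => if b i then Tvar C ord0 else Tzero C 1) r) (Tvar C ord0).

Lemma decomp n (v : 'I_n -> A) (r : term n) :
  eval v r = \bot <->
  eval (c1 (eval v (Jt n))) (rJ r) = \bot /\
  forall b, eval (c1 (eval v (Mt b (enum 'I_n)))) (rB b r) = \bot.
Proof.
have EJ : eval v r `\` eval v (Jt n) = eval (c1 (eval v (Jt n))) (rJ r).
  rewrite /rJ /= eval_subst P2; congr (_ `\` _); apply: eval_ext => i /=.
  apply/lt_bot_diff; exact: Jt_ge.
have EB : forall b, eval v r `&` eval v (Mt b (enum 'I_n))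
                    = eval (c1 (eval v (Mt b (enum 'I_n)))) (rB b r).
  move=> b; rewrite /rB /= eval_subst P1; congr (_ `&` _); apply: eval_ext => i.
  by rewrite cell_meet; case: (b i).
rewrite -EJ; split.
- move=> H; rewrite H diff0x; split => // b; by rewrite -EB H meet0x.
- move=> [HJ HB]; rewrite -(joinIB (eval v (Jt n)) (eval v r)) HJ joinx0.
  apply: (cover (l := enum 'I_n)); first exact: leIr.
  move=> b; rewrite -meetA (meet_r (x := eval v (Jt n)) (y := eval v (Mt b (enum 'I_n)))).
    by rewrite EB HB.
  exact: leBx.
Qed.

Lemma bwd : weakly_eq_noetherian C.
Proof.
move=> n S.
pose R := fun r => exists e, S e /\ r = rterm e.
have HS : forall v, solves v S <-> forall r, R r -> eval v r = \bot.
  move=> v; split.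
  - by move=> H r [e [Se ->]]; apply/rterm_bot/H.
  - move=> H e Se; apply/rterm_bot/H; by exists e.
pose RJ := fun r' => exists r, R r /\ r' = rJ r.
pose RB b := fun r' => exists r, R r /\ r' = rB b r.
have D1 := Defn_subst (Jt n) (WEN1 RJ).
have D2 : Defn (fun v : 'I_n -> A => forall b, b \in enum {ffun 'I_n -> bool} ->
   (fun u => forall r', RB b r' -> eval u r' = \bot) (c1 (eval v (Mt b (enum 'I_n))))).
  apply: Defn_all => b; exact: Defn_subst (Mt b (enum 'I_n)) (WEN1 (RB b)).
have [F HF] := Defn_and D1 D2.
exists F => v; split.
- move=> /HS H; apply: (proj1 (HF v)); split.
  + move=> r' [r [Rr ->]]; exact: (proj1 (proj1 (decomp v r) (H r Rr))).
  + move=> b _ r' [r [Rr ->]]; exact: (proj2 (proj1 (decomp v r) (H r Rr)) b).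
- move=> /(proj2 (HF v)) [G1 G2]; apply/HS => r Rr; apply/decomp; split.
  + apply: G1; by exists r.
  + move=> b; apply: (G2 b); [by rewrite mem_enum | by exists r].
Qed.

End Terms.

Theorem mainTheorem8 (d : Order.disp_t) (A : cbDistrLatticeType d)
    (C : A -> Prop) (HC : subalgebra C) :
  weakly_eq_noetherian C <->
  ((forall S : A -> Prop, (forall s, S s -> C s) -> bounded_above S ->
      exists u, is_supremum S u /\ C u) /\
   (forall S : A -> Prop, (forall s, S s -> C s) -> ~ bounded_above S ->
      exists c, C c /\
        (forall x : A, (forall s, S s -> x `&` s = \bot) <-> x `|` c = c))).
Proof.
split.
- move=> W; split; [exact: fwd1 | exact: fwd2].
- move=> [G1 G2]; exact: bwd G1 G2.
Qed.
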